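(* Let $\mathcal{Y}$ be a set, fix $\alpha\in(0,1)$ and $b\in(0,\infty]$ (possibly $+\infty$). Let $L_t:2^{\mathcal{Y}}\times\mathcal{Y}\to[0,1]$, $t\in\mathbb{N}$, be loss functions with $L_t(\mathcal{Y},y)=0$ and $L_t(\emptyset,y)=1$ for all $y\in\mathcal{Y}$. Let $y_t\in\mathcal{Y}$ be arbitrary and let $\mathcal{C}_t\subseteq\mathcal{Y}$ be prediction sets determined by $q_t$ such that $\mathcal{C}_t=\emptyset$ whenever $q_t\le -b$ and $\mathcal{C}_t=\mathcal{Y}$ whenever $q_t\ge b$. Let $h:\mathbb{N}\to[0,\infty)$ be admissible (nonnegative, nondecreasing, sublinear: $h(t)/t\to0$), and let $r_t:\mathbb{R}\to[-\infty,\infty]$ satisfy, for some constant $c>0$ and all $t,x$, $$x \geq c\, h(t) \implies r_t(x) \geq b, \qquad x \leq -c\, h(t) \implies r_t(x) \leq -b.$$ With $q_1$ arbitrary, consider the iteration $$q_{t+1} = r_t\Big(\sum_{i=1}^t\big(L_i(\mathcal{C}_i,y_i)-\alpha\big)\Big).$$ Then for all $T\ge1$, $$\Bigg|\frac1T\sum_{t=1}^T\big(L_t(\mathcal{C}_t,y_t)-\alpha\big)\Bigg| \le \frac{c\,h(T)+1}{T}.$$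
   Context: Deterministic online conformal risk control setting: no probabilistic assumptions on the sequence $y_t$. *)

(* Defs.v *)
From HB Require Import structures.
From mathcomp Require Import all_boot all_order all_algebra.
From mathcomp Require Import all_classical all_reals all_analysis.
Set Implicit Arguments. Unset Strict Implicit. Unset Printing Implicit Defensive.
Import Order.TTheory GRing.Theory Num.Theory.
Import numFieldNormedType.Exports.
Local Open Scope ring_scope.
Local Open Scope classical_set_scope.

Definition admissible (R : realType) (h : nat -> R) : Prop :=
  (forall t, 0 <= h t) /\
  (forall s t, (s <= t)%N -> h s <= h t) /\
  ((fun t : nat => h t / t%:R) @ \oo --> (0 : R)).

(* Main.v *)
Require Import Defs.
From HB Require Import structures.
From mathcomp Require Import all_boot all_order all_algebra.
From mathcomp Require Import all_classical all_reals all_analysis.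
From mathcomp Require Import lra.
Import Order.TTheory GRing.Theory Num.Theory.
Import numFieldNormedType.Exports.
Local Open Scope ring_scope.
Local Open Scope classical_set_scope.

Theorem proposition3 (R : realType) (Y : Type) (alpha : R) (b : \bar R)
  (L : nat -> set Y -> Y -> R) (y : nat -> Y)
  (Cset : nat -> \bar R -> set Y) (h : nat -> R)
  (r : nat -> R -> \bar R) (c : R) (q : nat -> \bar R) :
  0 < alpha < 1 ->
  (0 < b)%E ->
  (forall t A z, 0 <= L t A z <= 1) ->
  (forall t z, L t setT z = 0) ->
  (forall t z, L t set0 z = 1) ->
  (forall t x, (x <= - b)%E -> Cset t x = set0) ->
  (forall t x, (b <= x)%E -> Cset t x = setT) ->
  admissible h ->
  0 < c ->
  (forall t x, c * h t <= x -> (b <= r t x)%E) ->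
  (forall t x, x <= - (c * h t) -> (r t x <= - b)%E) ->
  (forall t, (1 <= t)%N ->
     q t.+1 = r t (\sum_(1 <= i < t.+1) (L i (Cset i (q i)) (y i) - alpha))) ->
  forall T : nat, (1 <= T)%N ->
    `| T%:R^-1 * \sum_(1 <= t < T.+1) (L t (Cset t (q t)) (y t) - alpha) |
      <= (c * h T + 1) / T%:R.
Proof.
move=> /andP[a0 a1] b0 L01 LT L0 Cneg Cpos [h0 [hmono _]] c0 rpos rneg qrec.
set e := fun i => L i (Cset i (q i)) (y i) - alpha.
have eb : forall i, -1 <= e i <= 1.
  move=> i; have /andP[l0 l1] := L01 i (Cset i (q i)) (y i).
  rewrite /e; apply/andP; split; lra.
have key : forall T, (1 <= T)%N -> `|\sum_(1 <= i < T.+1) e i| <= c * h T + 1.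
  elim=> [//|T IH] _.
  have ch0 : forall t, 0 <= c * h t by move=> t; apply: mulr_ge0; [exact: ltW|].
  have chm : c * h T <= c * h T.+1 by rewrite ler_pM2l //; apply: hmono.
  case: T IH chm => [_ _|T IH chm].
    rewrite big_nat1 -/(e 1%N); have /andP[u v] := eb 1%N.
    have := ch0 1%N; rewrite ler_norml; move=> ?; apply/andP; split; lra.
  have IH' := IH isT.
  rewrite big_nat_recr //=.
  set S := \sum_(1 <= i < T.+2) e i in IH' *.
  have := ch0 T.+1; have := ch0 T.+2.
  move: IH'; rewrite !ler_norml => /andP[s1 s2] g1 g2.
  have qe := qrec T.+1 isT.
  have /andP[u v] := eb T.+2.
  have [hS|hS] := lerP (c * h T.+1) S.
    have : e T.+2 = - alpha.
      rewrite /e qe Cpos ?LT ?sub0r //; exact: rpos.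
    move=> ->; apply/andP; split; lra.
  have [hS'|hS'] := lerP S (- (c * h T.+1)).
    have : e T.+2 = 1 - alpha.
      rewrite /e qe Cneg ?L0 //; exact: rneg.
    move=> ->; apply/andP; split; lra.
  apply/andP; split; lra.
move=> T T1; have K := key T T1.
have Tp : 0 < T%:R :> R by rewrite ltr0n.
rewrite normrM normfV normr_nat mulrC.
rewrite ler_pM2r; first exact: K.
by rewrite invr_gt0.
Qed.
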